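(* Let $(\mathbf x,\mathbf p,\mu)$ be a deterministic TFM satisfying weak UIC and $2$-weak-SCP, and let $\mathbf b=(b_1,\dots,b_m)$ be a bid vector. Suppose there are three distinct users $i,j,k$ such that $x_i(\mathbf b_{-k},0)=x_j(\mathbf b_{-k},0)=1$, $b_i-p(\mathbf b_{-k},0)>b_k$ and $b_j-p(\mathbf b_{-k},0)>b_k$. Then $x_i(\mathbf b)=x_j(\mathbf b)=1$ and $p(\mathbf b)\le p(\mathbf b_{-k},0)+b_k/2$.
   Context: Setting (TFM). Each user $i$ has a true value $v_i\ge0$ and submits a single bid $b_i\ge0$; $\mathbf b=(b_1,\dots,b_m)$, $(\mathbf b_{-k},0)$ the vector with user $k$'s bid replaced by $0$. A TFM has an inclusion rule (run by the miner, choosing at most $B$ bids) and confirmation, payment, miner-revenue rules (run by the blockchain on included bids); the mechanism treats users symmetrically. Composing the honest inclusion rule with the others gives deterministic $(\mathbf x,\mathbf p,\mu)$: $x_i(\mathbf b)\in\{0,1\}$ indicates confirmation, $p_i(\mathbf b)\le b_i$ the payment ($0$ if unconfirmed), $\mu(\mathbf b)$ the miner revenue. Strategic players (a user, the miner, or the miner with some users) may bid untruthfully after seeing all bids, inject fake bids (true value $0$), and (if the miner is involved) include any at most $B$ available bids. Weak ($1$-strict) utility: miner revenue (if the miner is in the player) plus $v-p$ for each confirmed transaction of the player (true value $v$, payment $p$), minus $(b-v)$ for each unconfirmed transaction of the player with bid $b>v$. Weak UIC: with an honest miner, each user's weak utility is maximized by truthful bidding without fake bids, whatever the other bids. $c$-weak-SCP: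 for every coalition of the miner with between $1$ and $c$ users, joint weak utility is maximized by truthful bidding and honest miner behavior, whatever the other bids. Universal payment: for mechanisms satisfying weak UIC and $2$-weak-SCP, all users confirmed under $\mathbf b$ pay the same amount; $p(\mathbf b)$ denotes this common payment, and $p(\mathbf b)=0$ if no user is confirmed under $\mathbf b$. *)

(* Defs.v *)
From Stdlib Require Import Reals Lra List Arith Permutation.
Import ListNotations.
Open Scope R_scope.

(** Users are identified with positions in the bid
    vector (a list R).  The miner runs [incl] (returns indices of the included
    bids); the blockchain runs [conf], [pay], [rev] on the block, i.e. the list
    of included bids, in the order of the index list. *)
Record TFM := mkTFM {
  cap  : nat;
  incl : list R -> list nat;
  conf : list R -> list bool;    (* confirmation rule, per block position *)
  pay  : list R -> list R;       (* payment rule, per block position *)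
  rev  : list R -> R
}.

Definition sumR (l : list R) : R := fold_right Rplus 0 l.
Definition nonneg_list (l : list R) : Prop := forall r, In r l -> 0 <= r.

Fixpoint pos (t : nat) (I : list nat) : option nat :=
  match I with
  | [] => None
  | a :: I' => if Nat.eqb a t then Some 0%nat else option_map S (pos t I')
  end.

Definition blk (b : list R) (I : list nat) : list R := map (fun i => nth i b 0) I.

Definition xI (M : TFM) (b : list R) (I : list nat) (t : nat) : bool :=
  match pos t I with Some q => nth q (conf M (blk b I)) false | None => false end.
Definition pI (M : TFM) (b : list R) (I : list nat) (t : nat) : R :=
  match pos t I with Some q => nth q (pay M (blk b I)) 0 | None => 0 end.

Definition x (M : TFM) (b : list R) (t : nat) : bool := xI M b (incl M b) t.
Definition p (M : TFM) (b : list R) (t : nat) : R := pI M b (incl M b) t.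
Definition mu (M : TFM) (b : list R) : R := rev M (blk b (incl M b)).

(** universal payment p(b): the payment of the (first) confirmed user,
    0 if nobody is confirmed *)
Definition univ_pay (M : TFM) (b : list R) : R :=
  match find (fun t => x M b t) (seq 0 (length b)) with
  | Some t => p M b t
  | None => 0
  end.

Definition valid_block (M : TFM) (b : list R) (I : list nat) : Prop :=
  NoDup I /\ (forall i, In i I -> (i < length b)%nat) /\ (length I <= cap M)%nat.

Definition is_perm (n : nat) (s : nat -> nat) : Prop :=
  (forall t, (t < n)%nat -> (s t < n)%nat) /\
  (forall t u, (t < n)%nat -> (u < n)%nat -> s t = s u -> t = u).
Definition permuted (s : nat -> nat) (l : list R) : list R :=
  map (fun t => nth (s t) l 0) (seq 0 (length l)).

Definition tfm_ok (M : TFM) : Prop :=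
  (forall b, valid_block M b (incl M b)) /\
  (forall l t, (t < length l)%nat ->
      nth t (pay M l) 0 <= nth t l 0 /\
      (nth t (conf M l) false = false -> nth t (pay M l) 0 = 0)) /\
  (forall l s, is_perm (length l) s ->
      rev M (permuted s l) = rev M l /\
      (forall t, (t < length l)%nat ->
          nth t (conf M (permuted s l)) false = nth (s t) (conf M l) false /\
          nth t (pay M (permuted s l)) 0 = nth (s t) (pay M l) 0)) /\
  (* symmetry: the honest inclusion rule only looks at bid values *)
  (forall b s, is_perm (length b) s ->
      Permutation (blk b (incl M b)) (blk (permuted s b) (incl M (permuted s b)))).

(** weak (1-strict) utility of the transaction at index t with true value v *)
Definition uutil (M : TFM) (b' : list R) (I : list nat) (t : nat) (v : R) : R :=
  if xI M b' I t then v - pI M b' I t else - Rmax 0 (nth t b' 0 - v).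

Definition dev_vec (b : list R) (C : list nat) (d : nat -> R) (fakes : list R) : list R :=
  map (fun t => if existsb (Nat.eqb t) C then d t else nth t b 0) (seq 0 (length b))
  ++ fakes.

(** joint weak utility of the player (miner if [miner], users C whose true
    values are their truthful bids in b, and the fake bids at positions
    >= length b, of true value 0) when the vector b' is posted and block I is built. *)
Definition coal_util (M : TFM) (miner : bool) (C : list nat) (b b' : list R)
    (I : list nat) : R :=
  (if miner then rev M (blk b' I) else 0)
  + sumR (map (fun c => uutil M b' I c (nth c b 0)) C)
  + sumR (map (fun t => uutil M b' I t 0) (seq (length b) (length b' - length b))).

Definition weak_UIC (M : TFM) : Prop :=
  forall (b : list R) (i : nat) (d : R) (fakes : list R),
    nonneg_list b -> (i < length b)%nat -> 0 <= d -> nonneg_list fakes ->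
    coal_util M false [i] b (dev_vec b [i] (fun _ => d) fakes)
              (incl M (dev_vec b [i] (fun _ => d) fakes))
    <= coal_util M false [i] b b (incl M b).

Definition c_weak_SCP (M : TFM) (c : nat) : Prop :=
  forall (b : list R) (C : list nat) (d : nat -> R) (fakes : list R) (I : list nat),
    nonneg_list b -> NoDup C -> (1 <= length C <= c)%nat ->
    (forall t, In t C -> (t < length b)%nat) ->
    (forall t, In t C -> 0 <= d t) -> nonneg_list fakes ->
    valid_block M (dev_vec b C d fakes) I ->
    coal_util M true C b (dev_vec b C d fakes) I
    <= coal_util M true C b b (incl M b).

Definition zero_at (b : list R) (k : nat) : list R := dev_vec b [k] (fun _ => 0) [].

(* Main.v *)
Require Import Defs.
From Stdlib Require Import Reals List Lra Lia Arith Bool.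
Import ListNotations.
Open Scope R_scope.

Lemma nth_map_seq (f : nat -> R) n t : (t < n)%nat -> nth t (map f (seq 0 n)) 0 = f t.
Proof. intros. rewrite nth_indep with (d' := f 0%nat) by (rewrite length_map, length_seq; lia).
rewrite map_nth, seq_nth by lia. reflexivity. Qed.

Lemma len_dev b C d f : length (dev_vec b C d f) = (length b + length f)%nat.
Proof. unfold dev_vec. rewrite length_app, length_map, length_seq. reflexivity. Qed.

Lemma nth_dev b C d f t : (t < length b)%nat ->
  nth t (dev_vec b C d f) 0 = if existsb (Nat.eqb t) C then d t else nth t b 0.
Proof. intros. unfold dev_vec. rewrite app_nth1 by (rewrite length_map, length_seq; lia).
apply (nth_map_seq (fun t => if existsb (Nat.eqb t) C then d t else nth t b 0)). lia. Qed.

Lemma dev_eq b C d f l : length l = length b ->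
  (forall t, (t < length b)%nat -> nth t l 0 = if existsb (Nat.eqb t) C then d t else nth t b 0) ->
  dev_vec b C d f = l ++ f.
Proof. intros Hl Hn. unfold dev_vec. f_equal. apply nth_ext with 0 0.
rewrite length_map, length_seq; auto.
intros t Ht. rewrite length_map, length_seq in Ht. rewrite nth_map_seq by lia. symmetry; auto. Qed.

Lemma len_set b a v : length (dev_vec b [a] (fun _ => v) []) = length b.
Proof. rewrite len_dev. simpl. lia. Qed.

Lemma nth_set b a v t : (t < length b)%nat ->
  nth t (dev_vec b [a] (fun _ => v) []) 0 = if Nat.eqb t a then v else nth t b 0.
Proof. intros. rewrite nth_dev by auto. simpl. rewrite orb_false_r. reflexivity. Qed.

Lemma nonneg_of_nth l : (forall t, (t < length l)%nat -> 0 <= nth t l 0) -> nonneg_list l.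
Proof. intros H r Hr. apply In_nth with (d := 0) in Hr. destruct Hr as [t [Ht <-]]. auto. Qed.

Lemma nonneg_nth l t : nonneg_list l -> 0 <= nth t l 0.
Proof. intros H. destruct (Nat.lt_ge_cases t (length l)).
apply H, nth_In; auto. rewrite nth_overflow by auto. lra. Qed.

Lemma pos_inj (s : nat -> nat) t I : (forall a c, s a = s c -> a = c) ->
  Defs.pos (s t) (map s I) = Defs.pos t I.
Proof. intros Hs. induction I as [|a I IH]; simpl; auto.
rewrite IH. destruct (Nat.eqb_spec a t); destruct (Nat.eqb_spec (s a) (s t)); subst; auto.
exfalso; auto. exfalso; auto. Qed.

Lemma pos_some t I q : Defs.pos t I = Some q -> (q < length I)%nat /\ nth q I 0%nat = t.
Proof. revert q. induction I as [|a I IH]; simpl; intros q H. discriminate.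
destruct (Nat.eqb_spec a t). inversion H; subst. split; auto; lia.
destruct (Defs.pos t I) as [m|] eqn:E; simpl in H; inversion H; subst. destruct (IH m eq_refl). split; simpl; auto; lia. Qed.

Lemma blk_map (s : nat -> nat) c c' I : (forall t, In t I -> nth (s t) c 0 = nth t c' 0) ->
  blk c (map s I) = blk c' I.
Proof. intros H. unfold blk. rewrite map_map. apply map_ext_in. auto. Qed.

Lemma xI_map M (s : nat -> nat) c c' I t u : (forall a c, s a = s c -> a = c) ->
  blk c (map s I) = blk c' I -> s t = u ->
  Defs.xI M c (map s I) u = Defs.xI M c' I t /\ pI M c (map s I) u = pI M c' I t.
Proof. intros Hs Hb <-. unfold Defs.xI, pI. rewrite pos_inj, Hb by auto. auto. Qed.

Lemma nth_map_lt {A} (f : A -> R) (l : list A) n d0 d : (n < length l)%nat -> nth n (map f l) d = f (nth n l d0).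
Proof. intros. rewrite nth_indep with (d' := f d0) by (rewrite length_map; auto). apply map_nth. Qed.

Lemma pay_le M v I t : tfm_ok M -> Defs.xI M v I t = true -> pI M v I t <= nth t v 0.
Proof. intros [_ [H _]] Hx. unfold Defs.xI, pI in *. destruct (Defs.pos t I) eqn:E; [|discriminate].
destruct (pos_some _ _ _ E) as [Hq Hn].
assert (Hl : (n < length (blk v I))%nat) by (unfold blk; rewrite length_map; auto).
destruct (H _ _ Hl) as [H1 _].
replace (nth t v 0) with (nth n (blk v I) 0); auto.
unfold blk. rewrite (nth_map_lt (fun i => nth i v 0) I n 0%nat 0) by auto. rewrite Hn. reflexivity. Qed.

Lemma uutil_conf M v I t w : Defs.xI M v I t = true -> uutil M v I t w = w - pI M v I t.
Proof. intros H; unfold uutil; rewrite H; auto. Qed.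
Lemma uutil_unconf M v I t w : Defs.xI M v I t = false -> uutil M v I t w = - Rmax 0 (nth t v 0 - w).
Proof. intros H; unfold uutil; rewrite H; auto. Qed.

Definition swap (a c t : nat) : nat := if Nat.eqb t a then c else if Nat.eqb t c then a else t.
Lemma swap_inj a c : forall u w, swap a c u = swap a c w -> u = w.
Proof. intros u w. unfold swap.
destruct (Nat.eqb_spec u a), (Nat.eqb_spec u c), (Nat.eqb_spec w a), (Nat.eqb_spec w c); lia. Qed.

Lemma nodup_swap a c I : NoDup I -> NoDup (map (swap a c) I).
Proof. intros. apply NoDup_map_NoDup_ForallPairs; auto. intros u w _ _. apply swap_inj. Qed.

Lemma coal1 M w v I a : length v = length w ->
  coal_util M true [a] w v I = Defs.rev M (blk v I) + uutil M v I a (nth a w 0).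
Proof. intros H. unfold coal_util. rewrite H, Nat.sub_diag. simpl. ring. Qed.
Lemma coal2 M w v I a c : length v = length w ->
  coal_util M true [a;c] w v I = Defs.rev M (blk v I) + uutil M v I a (nth a w 0) + uutil M v I c (nth c w 0).
Proof. intros H. unfold coal_util. rewrite H, Nat.sub_diag. simpl. ring. Qed.
Lemma coal0 M w v I a : length v = length w ->
  coal_util M false [a] w v I = uutil M v I a (nth a w 0).
Proof. intros H. unfold coal_util. rewrite H, Nat.sub_diag. simpl. ring. Qed.
Lemma coal2f M w I a c : 
  coal_util M true [a;c] w (w ++ [0]) I = Defs.rev M (blk (w ++ [0]) I) + uutil M (w ++ [0]) I a (nth a w 0)
   + uutil M (w ++ [0]) I c (nth c w 0) + uutil M (w ++ [0]) I (length w) 0.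
Proof. unfold coal_util. rewrite length_app. simpl. replace (length w + 1 - length w)%nat with 1%nat by lia.
simpl. ring. Qed.

Lemma scp_use M b C d f v I : c_weak_SCP M 2 -> nonneg_list b -> NoDup C -> (1 <= length C <= 2)%nat ->
  (forall t, In t C -> (t < length b)%nat) -> (forall t, In t C -> 0 <= d t) -> nonneg_list f ->
  dev_vec b C d f = v -> valid_block M v I ->
  coal_util M true C b v I <= coal_util M true C b b (Defs.incl M b).
Proof. intros H ? ? ? ? ? ? <- ?. apply H; auto. Qed.

Lemma uic_use M b i d v : weak_UIC M -> nonneg_list b -> (i < length b)%nat -> 0 <= d ->
  dev_vec b [i] (fun _ => d) [] = v ->
  coal_util M false [i] b v (Defs.incl M v) <= coal_util M false [i] b b (Defs.incl M b).
Proof. intros H ? ? ? <-. apply H; auto. intros r []. Qed.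

Lemma valid_honest M v : tfm_ok M -> valid_block M v (Defs.incl M v).
Proof. intros [H _]; auto. Qed.

Lemma valid_swap M v a c : tfm_ok M -> (a < length v)%nat -> (c < length v)%nat ->
  valid_block M v (map (swap a c) (Defs.incl M v)).
Proof. intros Hok Ha Hc. destruct (valid_honest M v Hok) as [H1 [H2 H3]].
split; [|split]. apply nodup_swap; auto.
intros u Hu. apply in_map_iff in Hu. destruct Hu as [t [<- Ht]]. unfold swap.
destruct (Nat.eqb_spec t a); auto. destruct (Nat.eqb_spec t c); auto.
rewrite length_map; auto. Qed.
Ltac eqbs := repeat match goal with |- context [Nat.eqb ?a ?b] => destruct (Nat.eqb_spec a b) end.

Lemma slot M c i j : tfm_ok M -> c_weak_SCP M 2 -> nonneg_list c -> i <> j ->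
  (i < length c)%nat -> (j < length c)%nat -> nth i c 0 = nth j c 0 -> x M c i = true ->
  uutil M c (Defs.incl M c) j (nth j c 0) >= nth j c 0 - p M c i.
Proof. intros Hok Hs Hn Hij Hi Hj Heq Hx.
assert (Hd : dev_vec c [j] (fun _ => nth j c 0) [] = c).
{ rewrite (dev_eq _ _ _ _ c) by (auto; intros t Ht; simpl; rewrite orb_false_r; eqbs; subst; auto).
  apply app_nil_r. }
pose proof (scp_use M c [j] (fun _ => nth j c 0) [] c (map (swap i j) (Defs.incl M c)) Hs Hn) as H.
rewrite !coal1 in H by auto.
assert (Hb : blk c (map (swap i j) (Defs.incl M c)) = blk c (Defs.incl M c)).
{ apply blk_map. intros t _. unfold swap. eqbs; subst; auto. }
destruct (xI_map M (swap i j) c c (Defs.incl M c) i j (swap_inj i j) Hb) as [X1 P1].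
{ unfold swap. eqbs; lia. }
rewrite Hb in H. rewrite (uutil_conf _ _ _ _ _ (eq_trans X1 Hx)) in H. rewrite P1 in H.
unfold p. cut (Defs.rev M (blk c (Defs.incl M c)) + (nth j c 0 - pI M c (Defs.incl M c) i) <=
    Defs.rev M (blk c (Defs.incl M c)) + uutil M c (Defs.incl M c) j (nth j c 0)). lra.
apply H.
- constructor. intros []. constructor.
- simpl; lia.
- intros t [<-|[]]; auto.
- intros t _; apply nonneg_nth; auto.
- intros r [].
- auto.
- apply valid_swap; auto.
Qed.
Lemma pay_le_x M b t : tfm_ok M -> x M b t = true -> p M b t <= nth t b 0.
Proof. intros. apply pay_le; auto. Qed.

Lemma up_lt M b i j : tfm_ok M -> weak_UIC M -> c_weak_SCP M 2 -> nonneg_list b -> i <> j ->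
  (i < length b)%nat -> (j < length b)%nat -> nth i b 0 < nth j b 0 ->
  x M b i = true -> x M b j = true -> p M b i = p M b j.
Proof. intros Hok Hu Hs Hn Hij Hi Hj Hlt Xi Xj.
set (c := dev_vec b [i] (fun _ => nth j b 0) []).
assert (Lc : length c = length b) by apply len_set.
assert (Nc : forall t, (t < length b)%nat -> nth t c 0 = if Nat.eqb t i then nth j b 0 else nth t b 0)
  by (intros; apply nth_set; auto).
assert (Nci : nth i c 0 = nth j b 0) by (rewrite Nc by auto; rewrite Nat.eqb_refl; auto).
assert (Ncj : nth j c 0 = nth j b 0) by (rewrite Nc by auto; eqbs; auto; lia).
assert (Nnc : nonneg_list c).
{ apply nonneg_of_nth. intros t Ht. rewrite Lc in Ht. rewrite Nc by auto. destruct (Nat.eqb t i); apply nonneg_nth; auto. }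
assert (Dcb : dev_vec c [i] (fun _ => nth i b 0) [] = b).
{ rewrite (dev_eq _ _ _ _ b) by (auto; intros t Ht; simpl; rewrite orb_false_r; rewrite Lc in Ht; rewrite Nc by auto; eqbs; subst; auto).
  apply app_nil_r. }
pose proof (pay_le_x M b i Hok Xi) as Pib.
set (Ib := Defs.incl M b) in *. set (Ic := Defs.incl M c) in *.
pose proof (uic_use M c i (nth i b 0) b Hu Nnc ltac:(lia) (nonneg_nth _ _ Hn) Dcb) as U1.
rewrite !coal0 in U1 by auto. fold Ib Ic in U1.
rewrite Nci in U1. unfold x in Xi, Xj. fold Ib in Xi, Xj.
rewrite (uutil_conf _ _ _ _ _ Xi) in U1.
destruct (Defs.xI M c Ic i) eqn:Xci.
2:{ rewrite (uutil_unconf _ _ _ _ _ Xci) in U1. rewrite Nci in U1. rewrite Rminus_diag, Rmax_left in U1 by lra.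
    unfold p in Pib. fold Ib in Pib. lra. }
rewrite (uutil_conf _ _ _ _ _ Xci) in U1.
pose proof (uic_use M b i (nth j b 0) c Hu Hn Hi (nonneg_nth _ _ Hn) eq_refl) as U2.
rewrite !coal0 in U2 by auto. fold Ib Ic in U2.
rewrite (uutil_conf _ _ _ _ _ Xi), (uutil_conf _ _ _ _ _ Xci) in U2.
pose proof (slot M c i j Hok Hs Nnc Hij ltac:(lia) ltac:(lia) ltac:(congruence)) as S1.
unfold x in S1. fold Ic in S1. specialize (S1 Xci). unfold p in S1. fold Ic in S1.
rewrite Ncj in S1.
destruct (Defs.xI M c Ic j) eqn:Xcj.
2:{ rewrite (uutil_unconf _ _ _ _ _ Xcj) in S1. rewrite Ncj in S1. rewrite Rminus_diag, Rmax_left in S1 by lra.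
    unfold p in Pib. fold Ib in Pib. lra. }
rewrite (uutil_conf _ _ _ _ _ Xcj) in S1.
pose proof (slot M c j i Hok Hs Nnc (not_eq_sym Hij) ltac:(lia) ltac:(lia) ltac:(congruence)) as S2.
unfold x in S2. fold Ic in S2. specialize (S2 Xcj). unfold p in S2. fold Ic in S2.
rewrite (uutil_conf _ _ _ _ _ Xci) in S2.
assert (NDi : NoDup [i]) by (constructor; [intros []|constructor]).
assert (NDij : NoDup [i;j]) by (constructor; [intros [H|[]]; lia|constructor; [intros []|constructor]]).
assert (F0 : nonneg_list []) by (intros r []).
pose proof (scp_use M b [i] (fun _ => nth j b 0) [] c Ic Hs Hn NDi ltac:(simpl; lia)
   ltac:(intros t [<-|[]]; auto) ltac:(intros; apply nonneg_nth; auto) F0 eq_refl (valid_honest M c Hok)) as Sa.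
rewrite !coal1 in Sa by auto. fold Ib in Sa.
rewrite (uutil_conf _ _ _ _ _ Xi), (uutil_conf _ _ _ _ _ Xci) in Sa.
pose proof (scp_use M c [i] (fun _ => nth i b 0) [] b Ib Hs Nnc NDi ltac:(simpl; lia)
   ltac:(intros t [<-|[]]; lia) ltac:(intros; apply nonneg_nth; auto) F0 Dcb (valid_honest M b Hok)) as Sb.
rewrite !coal1 in Sb by auto. fold Ic in Sb.
rewrite (uutil_conf _ _ _ _ _ Xi), (uutil_conf _ _ _ _ _ Xci) in Sb.
assert (Dbc : dev_vec b [i;j] (fun t => nth t c 0) [] = c).
{ rewrite (dev_eq _ _ _ _ c) by (auto; intros t Ht; simpl; rewrite orb_false_r; rewrite Nc by auto; eqbs; subst; auto; rewrite Nc by auto; eqbs; auto; lia).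
  apply app_nil_r. }
assert (Dcb2 : dev_vec c [i;j] (fun t => nth t b 0) [] = b).
{ rewrite (dev_eq _ _ _ _ b) by (auto; intros t Ht; simpl; rewrite orb_false_r; rewrite Lc in Ht; rewrite Nc by auto; eqbs; subst; auto; lia).
  apply app_nil_r. }
pose proof (scp_use M b [i;j] (fun t => nth t c 0) [] c Ic Hs Hn NDij ltac:(simpl; lia)
   ltac:(intros t [<-|[<-|[]]]; auto) ltac:(intros; apply nonneg_nth; auto) F0 Dbc (valid_honest M c Hok)) as Sc.
rewrite !coal2 in Sc by auto. fold Ib in Sc.
rewrite (uutil_conf _ _ _ _ _ Xi), (uutil_conf _ _ _ _ _ Xci), (uutil_conf _ _ _ _ _ Xj), (uutil_conf _ _ _ _ _ Xcj) in Sc.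
pose proof (scp_use M c [i;j] (fun t => nth t b 0) [] b Ib Hs Nnc NDij ltac:(simpl; lia)
   ltac:(intros t [<-|[<-|[]]]; lia) ltac:(intros; apply nonneg_nth; auto) F0 Dcb2 (valid_honest M b Hok)) as Sd.
rewrite !coal2 in Sd by auto. fold Ic in Sd.
rewrite (uutil_conf _ _ _ _ _ Xi), (uutil_conf _ _ _ _ _ Xci), (uutil_conf _ _ _ _ _ Xj), (uutil_conf _ _ _ _ _ Xcj) in Sd.
rewrite Nci, Ncj in *.
unfold p. fold Ib. lra.
Qed.
Lemma up M b i j : tfm_ok M -> weak_UIC M -> c_weak_SCP M 2 -> nonneg_list b ->
  (i < length b)%nat -> (j < length b)%nat ->
  x M b i = true -> x M b j = true -> p M b i = p M b j.
Proof. intros Hok Hu Hs Hn Hi Hj Xi Xj.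
destruct (Nat.eq_dec i j) as [<-|Hij]; auto.
destruct (Rtotal_order (nth i b 0) (nth j b 0)) as [Hl|[He|Hg]].
- apply up_lt; auto.
- pose proof (slot M b i j Hok Hs Hn Hij Hi Hj He Xi) as S1.
  pose proof (slot M b j i Hok Hs Hn (not_eq_sym Hij) Hj Hi (eq_sym He) Xj) as S2.
  unfold x in Xi, Xj. rewrite (uutil_conf _ _ _ _ _ Xj) in S1. rewrite (uutil_conf _ _ _ _ _ Xi) in S2.
  unfold p in *. lra.
- symmetry. apply up_lt; auto.
Qed.

Lemma univ_pay_eq M b i : tfm_ok M -> weak_UIC M -> c_weak_SCP M 2 -> nonneg_list b ->
  (i < length b)%nat -> x M b i = true -> univ_pay M b = p M b i.
Proof. intros Hok Hu Hs Hn Hi Xi. unfold univ_pay.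
destruct (find (fun t => x M b t) (seq 0 (length b))) as [t|] eqn:E.
- apply find_some in E. destruct E as [Hin Xt]. apply in_seq in Hin. apply up; auto; lia.
- exfalso. pose proof (find_none _ _ E i) as H. rewrite H in Xi. discriminate. apply in_seq. lia.
Qed.
Theorem mainTheorem18 (M : TFM) (b : list R) (i j k : nat) :
  tfm_ok M -> weak_UIC M -> c_weak_SCP M 2 ->
  nonneg_list b ->
  (i < length b)%nat -> (j < length b)%nat -> (k < length b)%nat ->
  i <> j -> i <> k -> j <> k ->
  x M (zero_at b k) i = true -> x M (zero_at b k) j = true ->
  nth i b 0 - univ_pay M (zero_at b k) > nth k b 0 ->
  nth j b 0 - univ_pay M (zero_at b k) > nth k b 0 ->
  x M b i = true /\ x M b j = true /\
  univ_pay M b <= univ_pay M (zero_at b k) + nth k b 0 / 2.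
Proof. intros Hok Hu Hs Hn Hi Hj Hk Hij Hik Hjk Xi' Xj' Gi Gj.
set (b' := zero_at b k) in *.
assert (Lb : length b' = length b) by apply len_set.
assert (Nb : forall t, (t < length b)%nat -> nth t b' 0 = if Nat.eqb t k then 0 else nth t b 0)
  by (intros; apply nth_set; auto).
assert (Nbk : nth k b' 0 = 0) by (rewrite Nb by auto; rewrite Nat.eqb_refl; auto).
assert (Nn' : nonneg_list b').
{ apply nonneg_of_nth. intros t Ht. rewrite Lb in Ht. rewrite Nb by auto. destruct (Nat.eqb t k); [lra|apply nonneg_nth; auto]. }
assert (P'i : univ_pay M b' = p M b' i) by (apply univ_pay_eq; auto; lia).
assert (P'j : univ_pay M b' = p M b' j) by (apply univ_pay_eq; auto; lia).
clearbody b'.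
unfold x, p in *.
set (Ib := Defs.incl M b) in *. set (I' := Defs.incl M b') in *.
set (f := uutil M b' I' k 0).
set (R := Defs.rev M (blk b Ib)). set (R' := Defs.rev M (blk b' I')).
set (Uk := uutil M b Ib k (nth k b 0)).
assert (F0 : nonneg_list []) by (intros r []).
assert (Hbk := nonneg_nth b k Hn).
assert (Dbb : dev_vec b' [k] (fun _ => nth k b 0) [] = b).
{ rewrite (dev_eq _ _ _ _ b) by (auto; intros t Ht; simpl; rewrite orb_false_r; rewrite Lb in Ht; rewrite Nb by auto; eqbs; subst; auto).
  apply app_nil_r. }
pose proof (scp_use M b' [k] (fun _ => nth k b 0) [] b Ib Hs Nn' ltac:(constructor; [intros []|constructor]) ltac:(simpl; lia)
   ltac:(intros t [<-|[]]; lia) ltac:(intros; auto) F0 Dbb (valid_honest M b Hok)) as S2.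
rewrite !coal1 in S2 by auto. fold Ib I' R R' in S2. rewrite Nbk in S2. fold f in S2.
assert (Uk0 : uutil M b Ib k 0 = Uk - nth k b 0 /\ 0 <= Uk).
{ unfold Uk. destruct (Defs.xI M b Ib k) eqn:X.
  - rewrite !(uutil_conf _ _ _ _ _ X). pose proof (pay_le M b Ib k Hok X). split; lra.
  - rewrite !(uutil_unconf _ _ _ _ _ X). rewrite Rminus_diag, (Rmax_left 0 0), (Rmax_right 0 (nth k b 0 - 0)) by lra. split; lra. }
destruct Uk0 as [Uk0 Ukp]. rewrite Uk0 in S2.
assert (Conf : forall t, (t < length b)%nat -> t <> k -> Defs.xI M b' I' t = true ->
    nth t b 0 - pI M b' I' t > nth k b 0 -> Defs.xI M b Ib t = true).
{ intros t Ht Htk Xt Gt.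
  assert (D : dev_vec b [k;t] (fun u => nth u b' 0) [] = b').
  { rewrite (dev_eq _ _ _ _ b') by (auto; intros u Hu0; simpl; rewrite orb_false_r; eqbs; subst; auto; rewrite Nb by auto; eqbs; auto; lia).
    apply app_nil_r. }
  pose proof (scp_use M b [k;t] (fun u => nth u b' 0) [] b' I' Hs Hn
     ltac:(constructor; [intros [H|[]]; lia|constructor; [intros []|constructor]]) ltac:(simpl; lia)
     ltac:(intros u [<-|[<-|[]]]; lia) ltac:(intros; apply nonneg_nth; auto) F0 D (valid_honest M b' Hok)) as S3.
  rewrite !coal2 in S3 by auto. fold Ib I' R R' Uk in S3.
  rewrite (uutil_conf _ _ _ _ _ Xt) in S3.
  assert (uutil M b' I' k (nth k b 0) >= f).
  { unfold f. destruct (Defs.xI M b' I' k) eqn:X.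
    - rewrite !(uutil_conf _ _ _ _ _ X). lra.
    - rewrite !(uutil_unconf _ _ _ _ _ X). rewrite Nbk. rewrite !Rmax_left by lra. lra. }
  destruct (Defs.xI M b Ib t) eqn:X; auto.
  rewrite (uutil_unconf _ _ _ _ _ X) in S3. rewrite Rminus_diag, Rmax_left in S3 by lra. lra. }
assert (Xi : Defs.xI M b Ib i = true) by (apply Conf; auto; lra).
assert (Xj : Defs.xI M b Ib j = true) by (apply Conf; auto; lra).
assert (Pi : univ_pay M b = pI M b Ib i) by (apply univ_pay_eq; auto).
assert (Pj : univ_pay M b = pI M b Ib j) by (apply univ_pay_eq; auto).
unfold p in Pi, Pj. fold Ib in Pi, Pj.
split; [auto|split; [auto|]].
set (n := length b) in *.
set (J := map (swap k n) I').
assert (D : dev_vec b [i;j] (fun t => nth t b 0) [0] = b ++ [0]).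
{ apply dev_eq; auto. intros t Ht. simpl. destruct (Nat.eqb t i), (Nat.eqb t j); auto. }
destruct (valid_honest M b' Hok) as [V1 [V2 V3]]. fold I' in V1, V2, V3.
assert (VJ : valid_block M (b ++ [0]) J).
{ split; [|split].
  - apply nodup_swap; auto.
  - intros u Hu1. apply in_map_iff in Hu1. destruct Hu1 as [t [<- Ht]]. apply V2 in Ht. rewrite Lb in Ht.
    rewrite length_app. simpl. unfold swap. fold n. eqbs; lia.
  - unfold J. rewrite length_map; auto. }
pose proof (scp_use M b [i;j] (fun t => nth t b 0) [0] (b ++ [0]) J Hs Hn
   ltac:(constructor; [intros [H|[]]; lia|constructor; [intros []|constructor]]) ltac:(simpl; lia)
   ltac:(intros u [<-|[<-|[]]]; lia) ltac:(intros; apply nonneg_nth; auto)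
   ltac:(intros r [<-|[]]; lra) D VJ) as S4.
rewrite coal2f, coal2 in S4 by auto. fold Ib R in S4.
assert (Hb : blk (b ++ [0]) J = blk b' I').
{ apply blk_map. intros t Ht. apply V2 in Ht. rewrite Lb in Ht. fold n in Ht. unfold swap.
  destruct (Nat.eqb_spec t k).
  - subst. rewrite Nbk. rewrite app_nth2 by lia. fold n. rewrite Nat.sub_diag. reflexivity.
  - destruct (Nat.eqb_spec t n); [lia|]. rewrite app_nth1 by lia. rewrite Nb by auto. eqbs; auto; lia. }
rewrite Hb in S4. fold R' in S4.
destruct (xI_map M (swap k n) (b ++ [0]) b' I' i i (swap_inj k n) Hb) as [XI PI].
{ unfold swap. eqbs; lia. }
destruct (xI_map M (swap k n) (b ++ [0]) b' I' j j (swap_inj k n) Hb) as [XJ PJ].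
{ unfold swap. eqbs; lia. }
destruct (xI_map M (swap k n) (b ++ [0]) b' I' k n (swap_inj k n) Hb) as [XK PK].
{ unfold swap. eqbs; lia. }
fold J in XI, PI, XJ, PJ, XK, PK.
assert (Ef : uutil M (b ++ [0]) J n 0 = f).
{ unfold f, uutil. rewrite XK, PK. rewrite app_nth2 by lia. fold n. rewrite Nat.sub_diag. rewrite Nbk. reflexivity. }
fold n in S4. rewrite Ef in S4.
rewrite (uutil_conf _ _ _ _ _ (eq_trans XI Xi')), (uutil_conf _ _ _ _ _ (eq_trans XJ Xj')) in S4.
rewrite PI, PJ in S4.
rewrite (uutil_conf _ _ _ _ _ Xi), (uutil_conf _ _ _ _ _ Xj) in S4.
lra.
Qed.
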